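(* Let $\mathcal{F}$ be a regular facets-pairing structure on $\mathcal{C}^n$. Then for every proper face $f$ of $\mathcal{C}^n$ of codimension $s$, the face family $\widehat f$ contains at most $2^s$ faces. Consequently $\widehat f$ has the maximal possible number $2^s$ of elements exactly when it is a perfect face family.
   Context: Let $[\pm n]=\{\pm1,\dots,\pm n\}$ and $\mathcal{C}^n=\{x\in\mathbb{R}^n: -\tfrac14\le x_i\le\tfrac14\}$. For $1\le i\le n$, $\mathbf{F}(i)$ and $\mathbf{F}(-i)$ denote the facets of $\mathcal{C}^n$ in $\{x_i=\tfrac14\}$ and $\{x_i=-\tfrac14\}$; for $j_1,\dots,j_s\in[\pm n]$ with distinct absolute values, $\mathbf{F}(j_1,\dots,j_s)=\bigcap_i\mathbf{F}(j_i)$. A signed permutation is a bijection $\sigma$ of $[\pm n]$ with $\sigma(-k)=-\sigma(k)$. A facets-pairing structure on $\mathcal{C}^n$ is a pair $(\omega,\{\tau_j\})$ where $\omega$ is a bijection of $[\pm n]$ with $\omega\circ\omega=\mathrm{id}$ and $\tau_j:\mathbf{F}(j)\to\mathbf{F}(\omega(j))$ are face-preserving homeomorphisms with $\tau_{\omega(j)}=\tau_j^{-1}$, such that for all $|j|\ne|k|$, writing $\tau_j(\mathbf{F}(j,k))=\mathbf{F}(\omega(j),k')$ and $\tau_k(\mathbf{F}(j,k))=\mathbf{F}(j',\omega(k))$, one has $\tau_{k'}\tau_j(p)=\tau_{j'}\tau_k(p)$ for all $p\in\mathbf{F}(j,k)$. It is regular if each $\tau_j$ is a Euclidean isometry and $\omega$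 is a signed permutation. A composition $\tau_{k_m}\circ\dots\circ\tau_{k_1}(f)$ applied to a proper face $f$ is valid if $f\subset\mathbf{F}(k_1)$ and $\tau_{k_i}\circ\dots\circ\tau_{k_1}(f)\subset\mathbf{F}(k_{i+1})$ for $1\le i<m$ ($m=0$ allowed, giving $f$). The face family $\widehat f$ is the set of all faces of this valid form. A face family $\widehat f$ with $f$ of codimension $s$ is perfect if it has exactly $2^s$ elements. *)

(* Defs.v *)
From Stdlib Require Import Reals Ensembles Finite_sets.
From mathcomp Require Import all_boot.
Local Open Scope R_scope.

Set Implicit Arguments.
Unset Strict Implicit.
Unset Printing Implicit Defensive.

Definition pt (n : nat) := 'I_n -> R.

(* Signed indices [+-n]: (i, true) encodes +(i+1), (i, false) encodes -(i+1). *)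
Definition sidx (n : nat) := ('I_n * bool)%type.
Definition sneg n (j : sidx n) : sidx n := (j.1, ~~ j.2).

Definition dist n (x y : pt n) : R :=
  sqrt (foldr (fun i acc => Rplus acc (Rsqr (Rminus (x i) (y i)))) R0 (enum 'I_n)).

Definition cube n (x : pt n) : Prop := forall i : 'I_n, (Ropp (/ 4) <= x i <= / 4)%R.

(* Value of the coordinate |j| on the facet F(j). *)
Definition sval (b : bool) : R := if b then (/ 4)%R else (Ropp (/ 4))%R.

Definition distinct_abs n (J : {set sidx n}) : Prop :=
  forall j k, j \in J -> k \in J -> j.1 = k.1 -> j = k.

Definition face n (J : {set sidx n}) : pt n -> Prop :=
  fun x => cube x /\ forall j, j \in J -> x j.1 = sval j.2.

Definition facet n (j : sidx n) : pt n -> Prop := face [set j].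
Definition face2 n (j k : sidx n) : pt n -> Prop := face [set j; k].

Definition subset_pt n (A B : pt n -> Prop) : Prop := forall x, A x -> B x.

Definition image n (f : pt n -> pt n) (A : pt n -> Prop) : pt n -> Prop :=
  fun y => exists x, A x /\ y = f x.

(* Facets-pairing structure (omega, {tau_j}). The maps tau_j are given as
   total maps R^n -> R^n; only their restriction to F(j) matters. *)
Definition facets_pairing n (omega : sidx n -> sidx n)
    (tau : sidx n -> pt n -> pt n) : Prop :=
  bijective omega /\ (forall j, omega (omega j) = j) /\
  (forall j x, facet j x -> facet (omega j) (tau j x)) /\
  (forall j x, facet j x -> tau (omega j) (tau j x) = x) /\
  (forall j x, facet j x -> forall eps, (0 < eps)%R ->
     exists delta, (0 < delta)%R /\
       forall y, facet j y -> (dist x y < delta)%R ->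
         (dist (tau j x) (tau j y) < eps)%R) /\
  (forall j (J : {set sidx n}), distinct_abs J -> j \in J ->
     exists J' : {set sidx n}, distinct_abs J' /\ omega j \in J' /\
       image (tau j) (face J) = face J') /\
  (forall j k, j.1 <> k.1 ->
     forall k' j', (omega j).1 <> k'.1 -> j'.1 <> (omega k).1 ->
       image (tau j) (face2 j k) = face2 (omega j) k' ->
       image (tau k) (face2 j k) = face2 j' (omega k) ->
       forall p, face2 j k p -> tau k' (tau j p) = tau j' (tau k p)).

Definition regular_facets_pairing n (omega : sidx n -> sidx n)
    (tau : sidx n -> pt n -> pt n) : Prop :=
  facets_pairing omega tau /\
  (forall j x y, facet j x -> facet j y -> dist (tau j x) (tau j y) = dist x y) /\
  (forall k, omega (sneg k) = sneg (omega k)).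

Inductive valid_image n (tau : sidx n -> pt n -> pt n) (f : pt n -> Prop)
  : (pt n -> Prop) -> Prop :=
| valid_nil : valid_image tau f f
| valid_cons (g : pt n -> Prop) (k : sidx n) :
    valid_image tau f g -> subset_pt g (facet k) ->
    valid_image tau f (image (tau k) g).

Definition face_family n (tau : sidx n -> pt n -> pt n) (f : pt n -> Prop)
  : Ensemble (pt n -> Prop) := fun g => valid_image tau f g.

Definition perfect n (tau : sidx n -> pt n -> pt n) (J : {set sidx n}) : Prop :=
  cardinal _ (face_family tau (face J)) (2 ^ #|J|).

(* Main.v *)
Require Import Defs.
From Stdlib Require Import Reals Ensembles Finite_sets.
From Stdlib Require Import Finite_sets_facts ClassicalEpsilon FunctionalExtensionality PropExtensionality Lra.
From mathcomp Require Import all_boot.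

Set Implicit Arguments.
Unset Strict Implicit.
Unset Printing Implicit Defensive.

Definition eqRb (x y : R) : bool := if Req_EM_T x y then true else false.
Lemma eqRbP x y : reflect (x = y) (eqRb x y).
Proof. rewrite /eqRb; case: Req_EM_T => h; constructor => //. Qed.

Definition Kq n (x : pt n) : {set sidx n} := [set k | eqRb (x k.1) (Defs.sval k.2)].

Lemma inKq n (x : pt n) k : (k \in Kq x) <-> x k.1 = Defs.sval k.2.
Proof. rewrite inE; split => [/eqRbP //| h]; exact/eqRbP. Qed.

Lemma sval_inj : injective Defs.sval.
Proof. case; case => //= h; lra. Qed.

Lemma sidx_eq n (k l : sidx n) : k.1 = l.1 -> Defs.sval k.2 = Defs.sval l.2 -> k = l.
Proof. case: k l => [a b] [c d] /= -> /sval_inj ->; done. Qed.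

Lemma Kq_da n (x : pt n) : distinct_abs (Kq x).
Proof.
move=> j k /inKq hj /inKq hk e; apply: sidx_eq => //.
by rewrite -hj -hk e.
Qed.

Lemma face_mem n (K : {set sidx n}) x : face K x <-> cube x /\ K \subset Kq x.
Proof.
split => [[c h]|[c /subsetP h]]; split => //.
- by apply/subsetP => j /h /inKq.
- by move=> j /h /inKq.
Qed.

Definition wit n (K : {set sidx n}) : pt n :=
  fun i => match [pick a in K | a.1 == i] with Some a => Defs.sval a.2 | None => R0 end.

Lemma wit_cube n (K : {set sidx n}) : cube (wit K).
Proof.
move=> i; rewrite /wit; case: pickP => [a _|_]; last by split; lra.
case: a.2 => /=; split; lra.
Qed.

Lemma Kq_wit n (K : {set sidx n}) : distinct_abs K -> Kq (wit K) = K.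
Proof.
move=> dK; apply/setP => k; apply/idP/idP.
- move/inKq; rewrite /wit; case: pickP => [a /andP [aK /eqP ea]|_].
  + move=> /sval_inj e.
    have -> : k = a by case: k a e ea {aK} => [? ?] [? ?] /= -> ->.
    done.
  + case: k.2 => /= ; lra.
- move=> kK; apply/inKq; rewrite /wit; case: pickP => [a /andP [aK /eqP ea]|].
  + by rewrite (dK _ _ aK kK ea).
  + by move/(_ k); rewrite kK eqxx.
Qed.

Lemma face_sub n (A B : {set sidx n}) :
  distinct_abs A -> (forall x, face A x -> face B x) -> B \subset A.
Proof.
move=> dA h.
have hw : face A (wit A) by apply/face_mem; rewrite (Kq_wit dA); split; [exact: wit_cube|exact: subxx].
have [_ ] := proj1 (face_mem _ _) (h _ hw).
by rewrite (Kq_wit dA).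
Qed.

Lemma face_inj n (A B : {set sidx n}) :
  distinct_abs A -> distinct_abs B -> (forall x, face A x <-> face B x) -> A = B.
Proof.
move=> dA dB h; apply/eqP; rewrite eqEsubset.
by rewrite (face_sub dA (fun x => proj1 (h x))) (face_sub dB (fun x => proj2 (h x))).
Qed.

Definition Hyps n (omega : sidx n -> sidx n) (tau : sidx n -> pt n -> pt n) : Prop :=
  (forall j, omega (omega j) = j) /\
  (forall j x, facet j x -> facet (omega j) (tau j x)) /\
  (forall j x, facet j x -> tau (omega j) (tau j x) = x) /\
  (forall j (J : {set sidx n}), distinct_abs J -> j \in J ->
     exists J' : {set sidx n}, distinct_abs J' /\ omega j \in J' /\
       Defs.image (tau j) (face J) = face J') /\
  (forall j k, j.1 <> k.1 ->
     forall k' j', (omega j).1 <> k'.1 -> j'.1 <> (omega k).1 ->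
       Defs.image (tau j) (face2 j k) = face2 (omega j) k' ->
       Defs.image (tau k) (face2 j k) = face2 j' (omega k) ->
       forall p, face2 j k p -> tau k' (tau j p) = tau j' (tau k p)).

Lemma regular_Hyps n omega tau : @regular_facets_pairing n omega tau -> Hyps omega tau.
Proof.
case=> [[_ [h1 [h2 [h3 [_ [h5 h6]]]]]] _]; do !split => //.
Qed.

Lemma facet_mem n k (x : pt n) : facet k x <-> cube x /\ k \in Kq x.
Proof. rewrite /facet face_mem sub1set; done. Qed.

Lemma face_facet n (K : {set sidx n}) k x : k \in K -> face K x -> facet k x.
Proof. move=> kK /face_mem [c s]; apply/facet_mem; split => //; exact: (subsetP s). Qed.

Lemma face_mono n (A B : {set sidx n}) x : A \subset B -> face B x -> face A x.
Proof. move=> s /face_mem [c s']; apply/face_mem; split => //; exact: subset_trans s s'. Qed.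

Lemma da_pair n (k l : sidx n) : k.1 <> l.1 -> distinct_abs [set k; l].
Proof.
move=> ne a b; rewrite !inE => /orP [] /eqP -> /orP [] /eqP -> //= e;
by [case: ne | case: ne].
Qed.

Lemma da_one n (k : sidx n) : distinct_abs [set k].
Proof. by move=> a b; rewrite !inE => /eqP -> /eqP ->. Qed.

Lemma img_back n omega tau (H : @Hyps n omega tau) k (A : pt n -> Prop) :
  (forall x, A x -> facet k x) ->
  forall x, Defs.image (tau (omega k)) (Defs.image (tau k) A) x <-> A x.
Proof.
case: H => Hinv [Hfac [Hback _]] hA x; split.
- by case=> y [[z [Az ->]] ->]; rewrite Hback //; apply: hA.
- move=> Ax; exists (tau k x); split; last by rewrite Hback //; apply: hA.
  by exists x.
Qed.

Lemma img_ext n (f : pt n -> pt n) (A B : pt n -> Prop) :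
  (forall x, A x <-> B x) -> forall x, Defs.image f A x <-> Defs.image f B x.
Proof. by move=> h x; split; case=> y [/h ? ->]; exists y. Qed.

Lemma img_inj n omega tau (H : @Hyps n omega tau) k (A B : pt n -> Prop) :
  (forall x, A x -> facet k x) -> (forall x, B x -> facet k x) ->
  (forall y, Defs.image (tau k) A y <-> Defs.image (tau k) B y) -> forall x, A x <-> B x.
Proof.
move=> hA hB h x.
rewrite -(img_back H hA) -(img_back H hB); exact: img_ext.
Qed.

Lemma img_facet n omega tau (H : @Hyps n omega tau) k x :
  Defs.image (tau k) (facet k) x <-> facet (omega k) x.
Proof.
case: H => Hinv [Hfac [Hback _]]; split.
- by case=> y [fy ->]; apply: Hfac.
- move=> fx; exists (tau (omega k) x); split.
  + by have := Hfac _ _ fx; rewrite Hinv.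
  + by have := Hback _ _ fx; rewrite Hinv.
Qed.

Lemma not_single n omega tau (H : @Hyps n omega tau) k l (K : {set sidx n}) :
  k.1 <> l.1 -> Defs.image (tau k) (face2 k l) = face K -> K <> [set omega k].
Proof.
move=> ne e eK; subst K.
have h : forall x, face2 k l x <-> facet k x.
  apply: (img_inj H (k:=k)).
  - by move=> x hx; apply: (face_facet _ hx); rewrite !inE eqxx.
  - by [].
  - by move=> y; rewrite e; symmetry; exact: (img_facet H k y).
have := face_inj (da_pair ne) (@da_one _ k) h.
move/setP/(_ l); rewrite !inE eqxx orbT => /esym /eqP el.
by apply: ne; rewrite el.
Qed.

Lemma ex_rho n omega tau (H : @Hyps n omega tau) k l : k.1 <> l.1 ->
  exists l', l'.1 <> (omega k).1 /\ Defs.image (tau k) (face2 k l) = face2 (omega k) l'.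
Proof.
move=> ne.
have H' := H; case: H' => Hinv [Hfac [Hback [Hfp _]]].
have [K' [dK' [wK' eK']]] := Hfp k [set k; l] (da_pair ne) (setU11 _ _).
have key : forall b, b \in K' -> b != omega k ->
    Defs.image (tau (omega k)) (face2 (omega k) b) = face [set k; l].
  move=> b bK nb.
  have neb : (omega k).1 <> b.1.
    by move=> e; move/eqP: nb; apply; symmetry; apply: dK'.
  have [A [dA [wA eA]]] := Hfp (omega k) [set omega k; b] (da_pair neb) (setU11 _ _).
  rewrite Hinv in wA.
  have sub : forall x, face [set k; l] x -> face A x.
    move=> x hx; rewrite -eA.
    have := proj2 (img_back H (A:=face2 k l) (k:=k) _ x) hx.
    have hf : forall x, face2 k l x -> facet k x.
      by move=> y hy; apply: (face_facet _ hy); rewrite !inE eqxx.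
    move=> /(_ hf) [y [hy ->]]; exists y; split => //.
    rewrite eK' in hy; apply: (face_mono _ hy).
    by apply/subsetP => z; rewrite !inE => /orP [] /eqP ->.
  have sA := face_sub (da_pair ne) sub.
  have nA := not_single H neb eA; rewrite Hinv in nA.
  rewrite eA; congr face; apply/eqP; rewrite eqEsubset sA /=.
  apply/subsetP => z; rewrite !inE => /orP [] /eqP -> //.
  apply/negPn/negP => lA; apply: nA; apply/setP => w; rewrite !inE.
  apply/idP/idP => [hwA|/eqP -> //].
  move/subsetP: sA => /(_ _ hwA); rewrite !inE => /orP [] // /eqP ez.
  by rewrite -ez hwA in lA.
have [a aK na] : exists2 a, a \in K' & a != omega k.
  case: (pickP (fun a => (a \in K') && (a != omega k))) => [a /andP [? ?]|none].
    by exists a.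
  exfalso; apply: (not_single H ne eK'); apply/setP => z; rewrite !inE.
  apply/idP/idP => [zK|/eqP -> //].
  by have := none z; rewrite zK /= => /negbFE.
exists a; split.
  by move=> e; move/eqP: na; apply; apply: dK'.
rewrite eK'; congr face; apply/setP => z; rewrite !inE.
apply/idP/idP => [zK|/orP [] /eqP -> //].
case: (eqVneq z (omega k)) => //= nz; apply/eqP.
have e2 : forall x, face2 (omega k) z x <-> face2 (omega k) a x.
  apply: (img_inj H (k:=omega k)).
  - by move=> x hx; apply: (face_facet _ hx); rewrite !inE eqxx.
  - by move=> x hx; apply: (face_facet _ hx); rewrite !inE eqxx.
  - by move=> y; rewrite (key _ zK nz) (key _ aK na).
have dz : distinct_abs [set omega k; z].
  apply: da_pair => e; move/eqP: nz; apply; symmetry; exact: dK'.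
have da : distinct_abs [set omega k; a].
  apply: da_pair => e; move/eqP: na; apply; symmetry; exact: dK'.
move: (face_inj dz da e2) => /setP /(_ z); rewrite !inE eqxx orbT.
by move=> /esym /orP [] /eqP // ez; rewrite ez eqxx in nz.
Qed.

Definition rho n (omega : sidx n -> sidx n) (tau : sidx n -> pt n -> pt n) (k l : sidx n) : sidx n :=
  if l == k then omega k else
  epsilon (inhabits l) (fun l' => l'.1 <> (omega k).1 /\
                                  Defs.image (tau k) (face2 k l) = face2 (omega k) l').

Lemma rho_spec n omega tau (H : @Hyps n omega tau) k l : k.1 <> l.1 ->
  (rho omega tau k l).1 <> (omega k).1 /\
  Defs.image (tau k) (face2 k l) = face2 (omega k) (rho omega tau k l).
Proof.
move=> ne; rewrite /rho; case: eqP => [e|_]; first by subst l.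
exact: (epsilon_spec (inhabits l) _ (ex_rho H ne)).
Qed.

Lemma rho_kk n omega tau k : @rho n omega tau k k = omega k.
Proof. by rewrite /rho eqxx. Qed.

Lemma rho_back n omega tau (H : @Hyps n omega tau) k l : k.1 <> l.1 ->
  rho omega tau (omega k) (rho omega tau k l) = l.
Proof.
move=> ne; have H' := H; case: H' => Hinv _.
have [n1 e1] := rho_spec H ne.
set l' := rho omega tau k l in n1 e1 *.
have ne' : (omega k).1 <> l'.1 by move=> e; apply: n1.
have [n2 e2] := rho_spec H ne'.
set l'' := rho omega tau (omega k) l' in n2 e2 *.
rewrite Hinv in n2 e2.
have h : forall x, face2 k l x <-> face2 k l'' x.
  move=> x; rewrite -(img_back H (A:=face2 k l) (k:=k)).
  - by rewrite e1 e2.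
  - by move=> y hy; apply: (face_facet _ hy); rewrite !inE eqxx.
have ne'' : k.1 <> l''.1 by move=> e; apply: n2.
move: (face_inj (da_pair ne) (da_pair ne'') h) => /setP /(_ l''); rewrite !inE eqxx orbT.
case/orP => /eqP // e; by rewrite e in ne''.
Qed.

Lemma rho_back' n omega tau (H : @Hyps n omega tau) k l : (l = k \/ k.1 <> l.1) ->
  rho omega tau (omega k) (rho omega tau k l) = l.
Proof.
case=> [->|ne]; last exact: rho_back.
by rewrite !rho_kk; case: H.
Qed.

Lemma da_ne n (K : {set sidx n}) k l : distinct_abs K -> k \in K -> l \in K ->
  (l = k \/ k.1 <> l.1).
Proof.
move=> dK kK lK; case: (eqVneq l k) => [->|nl]; [by left|right].
by move=> e; move/eqP: nl; apply; symmetry; apply: dK.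
Qed.

Lemma rho_inj_on n omega tau (H : @Hyps n omega tau) k (K : {set sidx n}) :
  distinct_abs K -> k \in K -> {in K &, injective (rho omega tau k)}.
Proof.
move=> dK kK x y xK yK e.
by rewrite -(rho_back' H (da_ne dK kK xK)) e (rho_back' H (da_ne dK kK yK)).
Qed.

Lemma card_rho n omega tau (H : @Hyps n omega tau) k (K : {set sidx n}) :
  distinct_abs K -> k \in K -> #|[set rho omega tau k x | x in K]| = #|K|.
Proof. move=> dK kK; apply: card_in_imset; exact: rho_inj_on. Qed.

Lemma G_sub n omega tau (H : @Hyps n omega tau) k (K K' : {set sidx n}) :
  distinct_abs K -> k \in K -> distinct_abs K' ->
  Defs.image (tau k) (face K) = face K' ->
  [set rho omega tau k x | x in K] \subset K'.
Proof.
move=> dK kK dK' e; have H' := H; case: H' => Hinv [Hfac _].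
apply/subsetP => _ /imsetP [l lK ->].
case: (da_ne dK kK lK) => [->|ne].
- rewrite rho_kk.
  have : [set omega k] \subset K'.
    apply: (face_sub dK') => x; rewrite -e => -[y [hy ->]].
    by apply: Hfac; apply: (face_facet kK).
  by rewrite sub1set.
- have [_ e2] := rho_spec H ne.
  have : [set omega k; rho omega tau k l] \subset K'.
    apply: (face_sub dK') => x; rewrite -e -/(face2 _ _) -e2 => -[y [hy ->]].
    exists y; split => //; apply: (face_mono _ hy).
    by apply/subsetP => z; rewrite !inE => /orP [] /eqP ->.
  by move/subsetP; apply; rewrite !inE eqxx orbT.
Qed.

Lemma G n omega tau (H : @Hyps n omega tau) k (K : {set sidx n}) :
  distinct_abs K -> k \in K ->
  Defs.image (tau k) (face K) = face [set rho omega tau k x | x in K] /\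
  distinct_abs [set rho omega tau k x | x in K].
Proof.
move=> dK kK; have H' := H; case: H' => Hinv [Hfac [Hback [Hfp _]]].
have [K' [dK' [wK' eK']]] := Hfp k K dK kK.
have s1 := G_sub H dK kK dK' eK'.
have [K3 [dK3 [wK3 eK3]]] := Hfp (omega k) K' dK' wK'.
have e3 : K3 = K.
  apply: face_inj => // x; rewrite -eK3 -eK'.
  apply: (img_back H (k:=k)) => y; exact: face_facet.
rewrite e3 in eK3.
have s2 := G_sub H dK' wK' dK eK3.
have eq : [set rho omega tau k x | x in K] = K'.
  apply/eqP; rewrite eqEcard s1 /= (card_rho H dK kK).
  rewrite -(card_rho H dK' wK'); exact: subset_leq_card.
by rewrite eq.
Qed.

Lemma Rel n omega tau (H : @Hyps n omega tau) (q : pt n) k :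
  cube q -> k \in Kq q ->
  Kq (tau k q) = [set rho omega tau k x | x in Kq q].
Proof.
move=> cq kq; have H' := H; case: H' => Hinv [Hfac [Hback _]].
have [e1 d1] := G H (@Kq_da _ q) kq.
have fq : face (Kq q) q by apply/face_mem; split.
have fk : facet k q by apply/facet_mem.
have s1 : [set rho omega tau k x | x in Kq q] \subset Kq (tau k q).
  have : face [set rho omega tau k x | x in Kq q] (tau k q).
    by rewrite -e1; exists q.
  by case/face_mem.
have [cq' wq'] := proj1 (facet_mem _ _) (Hfac _ _ fk).
have [e2 d2] := G H (@Kq_da _ (tau k q)) wq'.
have s2 : [set rho omega tau (omega k) x | x in Kq (tau k q)] \subset Kq q.
  have : face [set rho omega tau (omega k) x | x in Kq (tau k q)] q.
    rewrite -e2; exists (tau k q); split; last by rewrite Hback.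
    by apply/face_mem; split.
  by case/face_mem.
apply/esym/eqP; rewrite eqEcard s1 /= (card_rho H (@Kq_da _ q) kq).
rewrite -(card_rho H (@Kq_da _ _) wq'); exact: subset_leq_card.
Qed.

Definition state n := (pt n * (sidx n -> sidx n))%type.

Definition step n omega tau (st : state n) (i : sidx n) : state n :=
  (tau (st.2 i) st.1, fun j => rho omega tau (st.2 i) (st.2 j)).

Definition Inv n (J : {set sidx n}) (st : state n) : Prop :=
  cube st.1 /\ [set st.2 j | j in J] = Kq st.1 /\ {in J &, injective st.2}.

Definition Equiv n (J : {set sidx n}) (s1 s2 : state n) : Prop :=
  s1.1 = s2.1 /\ {in J, s1.2 =1 s2.2}.

Lemma lab_in n (J : {set sidx n}) st i : Inv J st -> i \in J -> st.2 i \in Kq st.1.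
Proof. by case=> _ [<- _] iJ; apply: imset_f. Qed.

Lemma step_inv n omega tau (H : @Hyps n omega tau) J (st : state n) i :
  Inv J st -> i \in J -> Inv J (step omega tau st i).
Proof.
move=> hI iJ; have kq := lab_in hI iJ.
have H' := H; case: H' => Hinv [Hfac _].
case: hI => cq [eK inj].
have fk : facet (st.2 i) st.1 by apply/facet_mem.
have [cq' _] := proj1 (facet_mem _ _) (Hfac _ _ fk).
split => //=; split.
- by rewrite (Rel H cq kq) -eK -imset_comp.
- move=> x y xJ yJ /= e; apply: inj => //.
  apply: (rho_inj_on H (@Kq_da _ _) kq) => //; rewrite -eK; exact: imset_f.
Qed.

Lemma step_equiv n omega tau J (s1 s2 : state n) i :
  Equiv J s1 s2 -> i \in J -> Equiv J (step omega tau s1 i) (step omega tau s2 i).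
Proof.
case=> e1 e2 iJ; rewrite /step; split => /=; first by rewrite e1 e2.
by move=> j jJ /=; rewrite e2 // e2.
Qed.

Lemma equiv_trans n J (s1 s2 s3 : state n) : Equiv J s1 s2 -> Equiv J s2 s3 -> Equiv J s1 s3.
Proof. by case=> a b [c d]; split; [rewrite a| move=> j jJ; rewrite b ?d]. Qed.

Lemma equiv_sym n J (s1 s2 : state n) : Equiv J s1 s2 -> Equiv J s2 s1.
Proof. by case=> a b; split => // j jJ; rewrite b. Qed.

Lemma step_back n omega tau (H : @Hyps n omega tau) J (st : state n) i :
  Inv J st -> i \in J -> Equiv J (step omega tau (step omega tau st i) i) st.
Proof.
move=> hI iJ; have kq := lab_in hI iJ.
have H' := H; case: H' => Hinv [Hfac [Hback _]].
have fk : facet (st.2 i) st.1 by apply/facet_mem; case: hI.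
rewrite /step /=; split => /=; first by rewrite rho_kk Hback.
move=> j jJ /=; rewrite rho_kk; apply: (rho_back' H).
apply: (da_ne (@Kq_da _ _) kq); exact: lab_in hI jJ.
Qed.

Lemma da_sub n (A B : {set sidx n}) : A \subset B -> distinct_abs B -> distinct_abs A.
Proof. move=> /subsetP s dB j k jA kA; apply: dB; exact: s. Qed.

Lemma face2C n (a b : sidx n) : face2 a b = face2 b a.
Proof. by rewrite /face2 setUC. Qed.

Lemma img2 n (f g : pt n -> pt n) (A : pt n -> Prop) x :
  Defs.image f (Defs.image g A) x <-> exists y, A y /\ x = f (g y).
Proof.
split; first by case=> z [[y [Ay ->]] ->]; exists y.
by case=> y [Ay ->]; exists (g y); split => //; exists y.
Qed.

Lemma key_sets n omega tau (H : @Hyps n omega tau) (q : pt n) k l (K : {set sidx n}) :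
  K \subset Kq q -> k \in K -> l \in K -> k.1 <> l.1 ->
  (forall y, face2 k l y ->
     tau (rho omega tau k l) (tau k y) = tau (rho omega tau l k) (tau l y)) ->
  [set rho omega tau (rho omega tau k l) x | x in [set rho omega tau k x | x in K]] =
  [set rho omega tau (rho omega tau l k) x | x in [set rho omega tau l x | x in K]].
Proof.
move=> sK kK lK ne hc.
have dK := da_sub sK (@Kq_da _ q).
have [e1 d1] := G H dK kK.
have [e2 d2] := G H dK lK.
have k1 : rho omega tau k l \in [set rho omega tau k x | x in K] by apply: imset_f.
have l1 : rho omega tau l k \in [set rho omega tau l x | x in K] by apply: imset_f.
have [e11 d11] := G H d1 k1.
have [e22 d22] := G H d2 l1.
apply: face_inj => // x.
rewrite -e11 -e22 -e1 -e2 !img2.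
have sub : forall y, face K y -> face2 k l y.
  move=> y; apply: face_mono; apply/subsetP => z; rewrite !inE => /orP [] /eqP -> //.
split; case=> y [hy ->]; exists y; split => //; rewrite hc //; exact: sub.
Qed.

Lemma step_comm n omega tau (H : @Hyps n omega tau) J (st : state n) a b :
  Inv J st -> a \in J -> b \in J -> a != b ->
  Equiv J (step omega tau (step omega tau st a) b) (step omega tau (step omega tau st b) a).
Proof.
move=> hI aJ bJ nab.
have H' := H; case: H' => Hinv [Hfac [Hback [_ Hcoc]]].
have kq := lab_in hI aJ; have lq := lab_in hI bJ.
have I1 := step_inv H (step_inv H hI aJ) bJ.
have I2 := step_inv H (step_inv H hI bJ) aJ.
case: (hI) => cq [eK inj].
set q := st.1 in cq eK kq lq *; set lam := st.2 in eK inj kq lq *.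
set k := lam a in kq *; set l := lam b in lq *.
have nkl : k != l by apply: contraNneq nab => e; apply/eqP; apply: inj.
have ne : k.1 <> l.1.
  by case: (da_ne (@Kq_da _ q) kq lq) => // e; rewrite e eqxx in nkl.
have ne' : l.1 <> k.1 by move=> e; apply: ne.
have [n1 e1] := rho_spec H ne.
have [n2 e2] := rho_spec H ne'.
have hc : forall y, face2 k l y ->
    tau (rho omega tau k l) (tau k y) = tau (rho omega tau l k) (tau l y).
  move=> y hy; apply: Hcoc => //.
  - by move=> e; apply: n1.
  - by rewrite (face2C k l) e2 face2C.
rewrite /step /= -/q -/lam -/k -/l; split => /=.
  apply: hc; apply/face_mem; split => //.
  by rewrite subUset !sub1set kq lq.
set k' := rho omega tau k l in n1 e1 hc *.
set j' := rho omega tau l k in n2 e2 hc *.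
set g1 := fun x => rho omega tau k' (rho omega tau k (lam x)).
set g2 := fun x => rho omega tau j' (rho omega tau l (lam x)).
have inj1 : {in J &, injective g1} by case: I1 => _ [_].
have inj2 : {in J &, injective g2} by case: I2 => _ [_].
have hS : forall S : {set sidx n}, S \subset J -> a \in S -> b \in S ->
    [set g1 x | x in S] = [set g2 x | x in S].
  move=> S sS aS bS.
  have sK : [set lam x | x in S] \subset Kq q.
    by rewrite -eK; apply: imsetS.
  have := key_sets H sK (imset_f lam aS) (imset_f lam bS) ne hc.
  by rewrite -!imset_comp.
have ab : [set a; b] \subset J by apply/subsetP => z; rewrite !inE => /orP [] /eqP ->.
have e_ab := hS _ ab (setU11 _ _) (setU1r _ (set11 _)).
rewrite !imsetU1 !imset_set1 in e_ab.
have g1a : g1 a = rho omega tau k' (omega k) by rewrite /g1 -/k rho_kk.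
have g1b : g1 b = omega k' by rewrite /g1 -/l -/k' rho_kk.
have g2a : g2 a = omega j' by rewrite /g2 -/k -/j' rho_kk.
have g2b : g2 b = rho omega tau j' (omega l) by rewrite /g2 -/l rho_kk.
have n12 : g1 a != g1 b by apply: contraNneq nab => e; apply/eqP; apply: inj1.
have ea : g1 a = g2 a.
  have : g1 a \in [set g2 a; g2 b] by rewrite -e_ab !inE eqxx.
  rewrite !inE => /orP [] /eqP // ea.
  have : g1 b \in [set g2 a; g2 b] by rewrite -e_ab !inE eqxx orbT.
  rewrite !inE => /orP [] /eqP eb; last by rewrite ea eb eqxx in n12.
  exfalso.
  have ekj : k' = j' by rewrite -(Hinv k') -(Hinv j') -g1b -g2a eb.
  move: ea; rewrite g1a g2b -ekj => ea.
  have : rho omega tau (omega k') (rho omega tau k' (omega k)) =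
         rho omega tau (omega k') (rho omega tau k' (omega l)) by rewrite ea.
  rewrite !(rho_back' H); first 1 last.
  - by right; rewrite ekj.
  - by right; move=> e; apply: n1.
  move=> e; move/eqP: nkl; apply; by rewrite -(Hinv k) e Hinv.
have eb : g1 b = g2 b.
  have : g1 b \in [set g2 a; g2 b] by rewrite -e_ab !inE eqxx orbT.
  rewrite !inE => /orP [] /eqP // eb; by rewrite ea eb eqxx in n12.
move=> j jJ; rewrite -/(g1 j) -/(g2 j).
case: (eqVneq j a) => [->//|nja]; case: (eqVneq j b) => [->//|njb].
have abj : [set a; b; j] \subset J by apply/subsetP => z; rewrite !inE => /orP [/orP []|] /eqP ->.
have e3 : [set g1 x | x in [set a; b; j]] = [set g2 x | x in [set a; b; j]].
  by apply: hS => //; rewrite !inE eqxx ?orbT.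
rewrite !imsetU ?imsetU1 !imset_set1 in e3.
have : g1 j \in [set g2 a; g2 b; g2 j] by rewrite -e3 !inE eqxx !orbT.
rewrite !inE -ea -eb => /orP [/orP []|] /eqP // e; exfalso.
- by move/eqP: nja; apply; apply: inj1.
- by move/eqP: njb; apply; apply: inj1.
Qed.

Definition run n omega tau (st : state n) (l : seq (sidx n)) : state n :=
  foldl (step omega tau) st l.

Definition tog n (S : {set sidx n}) i := if i \in S then S :\ i else i |: S.

Lemma in_tog n (S : {set sidx n}) i y :
  (y \in tog S i) = (if y == i then i \notin S else y \in S).
Proof.
rewrite /tog; case: (eqVneq y i) => [->|ne]; case: ifP => iS; rewrite !inE ?eqxx ?iS //.
- by rewrite ne.
- by rewrite (negbTE ne).
Qed.

Lemma equiv_refl n J (s : state n) : Equiv J s s.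
Proof. by split. Qed.

Lemma run_inv n omega tau (H : @Hyps n omega tau) J (st : state n) l :
  Inv J st -> {subset l <= J} -> Inv J (run omega tau st l).
Proof.
elim: l st => [//|x l IH] st hI sl /=.
apply: IH; first by apply: step_inv => //; apply: sl; rewrite inE eqxx.
by move=> y yl; apply: sl; rewrite inE yl orbT.
Qed.

Lemma toggle n omega tau (H : @Hyps n omega tau) J (st : state n) L i (S : {set sidx n}) :
  Inv J st -> uniq L -> {subset L <= J} -> i \in L ->
  Equiv J (step omega tau (run omega tau st [seq x <- L | x \in S]) i)
          (run omega tau st [seq x <- L | x \in tog S i]).
Proof.
move=> hI; elim/last_ind: L => [//|L x IH].
rewrite rcons_uniq => /andP [xL uL] sL.
have sL' : {subset L <= J} by move=> y yL; apply: sL; rewrite mem_rcons inE yL orbT.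
have xJ : x \in J by apply: sL; rewrite mem_rcons inE eqxx.
have iR : forall s : {set sidx n}, {subset [seq y <- L | y \in s] <= J}.
  by move=> s y; rewrite mem_filter => /andP [_ /sL'].
rewrite mem_rcons inE => /orP [/eqP eix|iL].
- subst i.
  have ef : [seq y <- L | y \in tog S x] = [seq y <- L | y \in S].
    apply: eq_in_filter => y yL; rewrite in_tog.
    by case: eqP => // e; rewrite -e yL in xL.
  rewrite !filter_rcons ef in_tog eqxx.
  case: ifP => xS /=; rewrite /run foldl_rcons.
  + apply: (step_back H) => //; exact: run_inv.
  + exact: equiv_refl.
- have nix : i != x by apply: contraNneq xL => <-.
  have nxi : x != i by rewrite eq_sym.
  rewrite !filter_rcons in_tog (negbTE nxi).
  case: ifP => xS; last exact: IH.
  rewrite /run !foldl_rcons.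
  apply: equiv_trans (step_comm H (run_inv H hI (iR S)) xJ (sL' _ iL) nxi) _.
  apply: step_equiv xJ; exact: IH.
Qed.

Definition st0 n (J : {set sidx n}) : state n := (wit J, id).

Lemma inv0 n (J : {set sidx n}) : distinct_abs J -> Inv J (st0 J).
Proof.
move=> dJ; split; first exact: wit_cube.
by split; [rewrite /= imset_id Kq_wit | by move=> x y _ _].
Qed.

Lemma family_in n omega tau (H : @Hyps n omega tau) (J : {set sidx n}) :
  distinct_abs J -> forall g, valid_image tau (face J) g ->
  exists S, S \in powerset J /\
    g = face (Kq (run omega tau (st0 J) [seq x <- enum J | x \in S]).1).
Proof.
move=> dJ g hv; elim: hv => [|g0 k _ [S [SJ e0]] sub].
- exists set0; split; first by rewrite powersetE sub0set.
  have -> : [seq x <- enum J | x \in set0] = [::].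
    by rewrite (eq_filter (a2 := pred0)) ?filter_pred0 // => x; rewrite inE.
  by rewrite /= Kq_wit.
- set st := run omega tau (st0 J) [seq x <- enum J | x \in S] in e0.
  have hI : Inv J st by apply: (run_inv H (inv0 dJ)) => y; rewrite mem_filter mem_enum => /andP [].
  have kq : k \in Kq st.1.
    have : [set k] \subset Kq st.1.
      by apply: (face_sub (@Kq_da _ _)) => x hx; apply: sub; rewrite e0.
    by rewrite sub1set.
  case: (hI) => cq [eK _].
  move: (kq); rewrite -eK => /imsetP [i iJ ek].
  exists (tog S i); split.
    rewrite !powersetE in SJ *; rewrite /tog; case: ifP => _.
    + exact: subset_trans (subD1set _ _) SJ.
    + by rewrite subUset sub1set iJ SJ.
  have iE : i \in enum J by rewrite mem_enum.
  have sE : {subset enum J <= J} by move=> y; rewrite mem_enum.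
  have [tv _] := toggle H S (inv0 dJ) (enum_uniq J) sE iE.
  rewrite -tv /= -/st -ek e0 (Rel H cq kq).
  by case: (G H (@Kq_da _ st.1) kq).
Qed.

Lemma ens_ext U (A B : Ensemble U) : (forall x, A x <-> B x) -> A = B.
Proof.
move=> h; apply: functional_extensionality => x; apply: propositional_extensionality; exact: h.
Qed.

Lemma card_faces n (s : seq {set sidx n}) :
  exists m, (m <= size s)%N /\
    cardinal _ (fun g : pt n -> Prop => exists K, K \in s /\ g = face K) m.
Proof.
elim: s => [|K s [m [hm hc]]].
- exists 0; split => //.
  have -> : (fun g : pt n -> Prop => exists K, K \in [::] /\ g = face K) = Empty_set _.
    by apply: ens_ext => g; split; [case=> K [] | case].
  exact: card_empty.
- case: (classic (exists K', K' \in s /\ face K = face K')) => [[K' [K's eK]]|nK].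
  + exists m; split; first by apply: leqW.
    have -> : (fun g : pt n -> Prop => exists K0, K0 \in K :: s /\ g = face K0) =
              (fun g : pt n -> Prop => exists K0, K0 \in s /\ g = face K0) => //.
    apply: ens_ext => g; split.
    * case=> K0 []; rewrite inE => /orP [/eqP -> ->|K0s ->]; [by exists K' | by exists K0].
    * by case=> K0 [K0s ->]; exists K0; rewrite inE K0s orbT.
  + exists m.+1; split => //.
    have -> : (fun g : pt n -> Prop => exists K0, K0 \in K :: s /\ g = face K0) =
              Add _ (fun g : pt n -> Prop => exists K0, K0 \in s /\ g = face K0) (face K).
      apply: ens_ext => g; split.
      * case=> K0 []; rewrite inE => /orP [/eqP -> ->|K0s ->].
          by apply: Add_intro2.
        by apply: Add_intro1; exists K0.
      * move=> hg; case: (Add_inv _ _ _ _ hg) => [[K0 [K0s ->]]|<-].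
          by exists K0; rewrite inE K0s orbT.
        by exists K; rewrite inE eqxx.
    apply: card_add => //.
Qed.

Theorem mainTheorem3 (n : nat) (omega : sidx n -> sidx n)
    (tau : sidx n -> pt n -> pt n) :
  regular_facets_pairing omega tau ->
  forall J : {set sidx n}, distinct_abs J -> J != set0 ->
    (exists m : nat, (m <= 2 ^ #|J|)%N /\
       cardinal _ (face_family tau (face J)) m) /\
    (cardinal _ (face_family tau (face J)) (2 ^ #|J|) <-> perfect tau J).
Proof.
move=> hR J dJ _; split; last by split => h; exact h.
have H := regular_Hyps hR.
set X := [set Kq (run omega tau (st0 J) [seq x <- enum J | x \in S]).1 | S : {set sidx n} in powerset J].
have [mY [hmY hY]] := card_faces (enum X).
have inc : Included _ (face_family tau (face J))
              (fun g : pt n -> Prop => exists K, K \in enum X /\ g = face K).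
  move=> g hg; have [S [SJ ->]] := family_in H dJ hg.
  by eexists; split; [rewrite mem_enum; apply: imset_f; exact: SJ | reflexivity].
have fin : Finite_sets.Finite _ (face_family tau (face J)).
  apply: (Finite_downward_closed _ _ _ _ inc); exact: (cardinal_finite _ _ _ hY).
have [m hm] := finite_cardinal _ _ fin.
exists m; split => //.
have le1 := incl_card_le _ _ _ _ _ hm hY inc.
apply: leq_trans (_ : mY <= _)%N; first by apply/leP.
apply: leq_trans hmY _; rewrite -cardE -card_powerset; exact: leq_imset_card.
Qed.
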